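(* Let $w=w_1\cdots w_n$ be a word of length $n\ge 2$ such that $w_i=w_{n-i+1}$ for all $1\le i\le n$, and let $k$ be the maximum number of times any single letter appears in $w$. Then $f(w)=\max\{n,2k\}+2$.
   Context: A word of length $n$ is a sequence $w=w_1w_2\cdots w_n$ of letters (symbols). Let $[n]=\{1,\dots,n\}$. An $n$-grid is a function $G:[n]^2\to\Sigma$, where $\Sigma$ is an arbitrary set of letters. The $i$th row of $G$ contains $w$ if $G(i,j)=w_j$ for all $1\le j\le n$, or $G(i,j)=w_{n-j+1}$ for all $1\le j\le n$. The $j$th column contains $w$ if $G(i,j)=w_i$ for all $i$, or $G(i,j)=w_{n-i+1}$ for all $i$. The main diagonal contains $w$ if $G(i,i)=w_i$ for all $i$ or $G(i,i)=w_{n-i+1}$ for all $i$; the anti-diagonal contains $w$ if $G(i,n-i+1)=w_i$ for all $i$ or $G(i,n-i+1)=w_{n-i+1}$ for all $i$. Let $f(w,G)$ be the number of the $2n+2$ lines ($n$ rows, $n$ columns, $2$ diagonals) of $G$ that contain $w$, and $f(w)=\max_G f(w,G)$ over all $n$-grids $G$. *)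

(* Defs.v *)
(* Words of length n over an alphabet T (an eqType) are
   functions 'I_n -> T (0-based indices); an n-grid is a function
   'I_n -> 'I_n -> T (G i j = entry in row i, column j). *)
From mathcomp Require Import all_boot all_order.
Set Implicit Arguments. Unset Strict Implicit. Unset Printing Implicit Defensive.

Section Grid.
Variables (T : eqType) (n : nat).

Definition row_contains (w : 'I_n -> T) (G : 'I_n -> 'I_n -> T) (i : 'I_n) : bool :=
  [forall j, G i j == w j] || [forall j, G i j == w (rev_ord j)].

Definition col_contains (w : 'I_n -> T) (G : 'I_n -> 'I_n -> T) (j : 'I_n) : bool :=
  [forall i, G i j == w i] || [forall i, G i j == w (rev_ord i)].

Definition diag_contains (w : 'I_n -> T) (G : 'I_n -> 'I_n -> T) : bool :=
  [forall i, G i i == w i] || [forall i, G i i == w (rev_ord i)].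

(* anti-diagonal contains w: G(i, n-i+1) in 1-based indexing *)
Definition antidiag_contains (w : 'I_n -> T) (G : 'I_n -> 'I_n -> T) : bool :=
  [forall i, G i (rev_ord i) == w i] || [forall i, G i (rev_ord i) == w (rev_ord i)].

Definition fwG (w : 'I_n -> T) (G : 'I_n -> 'I_n -> T) : nat :=
  #|[pred i | row_contains w G i]| + #|[pred j | col_contains w G j]|
  + diag_contains w G + antidiag_contains w G.

Definition f_is (w : 'I_n -> T) (m : nat) : Prop :=
  (exists G : 'I_n -> 'I_n -> T, fwG w G = m) /\
  (forall G : 'I_n -> 'I_n -> T, fwG w G <= m).

Definition max_mult (w : 'I_n -> T) : nat :=
  \max_(i : 'I_n) #|[pred j | w j == w i]|.

End Grid.

(* Main.v *)
Require Import Defs.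
From mathcomp Require Import all_boot all_order.

Section Aux.
Variables (T : eqType) (n : nat) (w : 'I_n -> T).
Hypothesis pal : forall i : 'I_n, w i = w (rev_ord i).

Lemma rowE {G i} : row_contains w G i -> forall j, G i j = w j.
Proof.
case/orP=> /forallP H j; have := H j; move/eqP=> ->; by rewrite -?pal.
Qed.

Lemma colE {G j} : col_contains w G j -> forall i, G i j = w i.
Proof.
case/orP=> /forallP H i; have := H i; move/eqP=> ->; by rewrite -?pal.
Qed.

Lemma card_le_mult (a : 'I_n) (A : pred 'I_n) :
  (forall i, A i -> w i = w a) -> #|A| <= max_mult w.
Proof.
move=> HA; apply: leq_trans (leq_bigmax a).
apply: subset_leq_card; apply/subsetP=> i; rewrite !inE => Ai.
by rewrite (HA i Ai).
Qed.

Lemma upper G : fwG w G <= maxn n (2 * max_mult w) + 2.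
Proof.
rewrite /fwG -addnA.
have Hb : diag_contains w G + antidiag_contains w G <= 2.
  by case: (diag_contains _ _); case: (antidiag_contains _ _).
apply: leq_add; last exact: Hb.
case: (pickP [pred j | col_contains w G j]) => [j0 Cj0|C0].
  case: (pickP [pred i | row_contains w G i]) => [i0 Ri0|R0].
    apply: leq_trans (leq_maxr _ _).
    rewrite mul2n -addnn; apply: leq_add.
      apply: (@card_le_mult j0) => i Ri.
      by rewrite -(rowE Ri j0) (colE Cj0 i).
    apply: (@card_le_mult i0) => j Cj.
    by rewrite -(colE Cj i0) (rowE Ri0 j).
  rewrite (eq_card0 R0) add0n; apply: leq_trans (leq_maxl _ _).
  by rewrite -[X in _ <= X]card_ord max_card.
rewrite (eq_card0 C0) addn0; apply: leq_trans (leq_maxl _ _).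
by rewrite -[X in _ <= X]card_ord max_card.
Qed.

End Aux.

Theorem theorem2 (T : eqType) (n : nat) (w : 'I_n -> T) :
  2 <= n ->
  (forall i : 'I_n, w i = w (rev_ord i)) ->
  f_is w (maxn n (2 * max_mult w) + 2).
Proof.
move=> n2 pal.
suff [G HG] : exists G, maxn n (2 * max_mult w) + 2 <= fwG w G.
  split; last exact: upper.
  by exists G; apply/eqP; rewrite eqn_leq HG upper.
have n0 : 0 < n by apply: leq_trans n2.
have diagG : forall G : 'I_n -> 'I_n -> T,
    (forall i, G i i = w i) -> (forall i, G i (rev_ord i) = w i) ->
    diag_contains w G + antidiag_contains w G = 2.
  move=> G H1 H2; rewrite /diag_contains /antidiag_contains.
  have -> : [forall i, G i i == w i] by apply/forallP=> i; rewrite H1.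
  by have -> : [forall i, G i (rev_ord i) == w i] by apply/forallP=> i; rewrite H2.
case: (leqP (2 * max_mult w) n) => Hk.
  exists (fun _ j => w j).
  rewrite /fwG -addnA diagG; try by move=> i; rewrite -?pal.
  rewrite leq_add2r -[X in X <= _]addn0 leq_add //.
  rewrite -[X in X <= _]card_ord; apply: subset_leq_card; apply/subsetP=> i _.
  by rewrite inE /row_contains; apply/orP; left; apply/forallP.
pose j0 := [arg max_(i > Ordinal n0) #|[pred j | w j == w i]|].
have Hj0 : max_mult w = #|[pred j | w j == w j0]|.
  by rewrite /max_mult (bigmax_eq_arg (Ordinal n0)).
pose a := w j0.
exists (fun i j => if w i == a then w j else w i).
rewrite /fwG -addnA diagG; try by move=> i; case: ifP => _; rewrite -?pal.
rewrite leq_add2r mul2n -addnn Hj0; apply: leq_add.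
  apply: subset_leq_card; apply/subsetP=> i; rewrite !inE => Hi.
  by apply/orP; left; apply/forallP=> j; rewrite Hi.
apply: subset_leq_card; apply/subsetP=> j; rewrite !inE => Hj.
apply/orP; left; apply/forallP=> i; case: ifP => [/eqP -> | //].
by rewrite (eqP Hj).
Qed.
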